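(* Let $W\in\mathcal N$ with $\langle W,W\rangle=1$ and $W\notin\mathcal Z$, let $E_3=W\times E_2$, $w=\sqrt{\langle W,W\rangle_W}$, and let $f_1,f_2,f_3$ be the numbers $f_1=\langle [E_3,E_1],W\rangle_W$, $f_2=\tfrac12\big(\langle[E_3,W],E_2\rangle_W+\langle[E_3,E_2],W\rangle_W-\langle[E_3,W],W\rangle_W\langle X_0,E_2\rangle\big)$, $f_3=\tfrac12\big(\langle[E_3,W],E_2\rangle_W+\langle[E_2,E_3],W\rangle_W-\langle[E_3,W],W\rangle_W\langle X_0,E_2\rangle\big)$. Put $f_4=-\frac{f_1}{w}-f_2\langle X_0,E_2\rangle+\frac{3w}{4}\langle X_0,E_2\rangle$ and $f_5=\langle [E_2,E_3],E_2\rangle_W-\frac32 f_3\langle X_0,E_2\rangle$. Then the Chern–Rund connection $\nabla^W$ satisfies $$\nabla^W_{E_1}E_1=\frac{f_1}{w}E_3,\quad \nabla^W_{E_1}E_2=\nabla^W_{E_2}E_1=\frac{f_2}{w}E_3,\quad \nabla^W_{E_2}E_2=f_4E_3,$$ $$\nabla^W_{E_3}E_1=\nabla^W_{E_1}E_3+[E_3,E_1]=\frac{f_3}{w}E_2,$$ $$\nabla^W_{E_2}E_3=\nabla^W_{E_3}E_2+[E_2,E_3]=-\frac{f_2}{w}E_1+f_5E_2,$$ $$\nabla^W_{E_3}E_3=-\frac{f_3}{2}\langle X_0,E_2\rangle E_3.$$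
   Context: Let $\mathcal N$ be the 3-dimensional real Heisenberg Lie algebra with basis $(X,Y,Z)$ whose only nonzero brackets are $[X,Y]=-[Y,X]=Z$. Let $\langle\cdot,\cdot\rangle$ be the inner product on $\mathcal N$ for which $(X,Y,Z)$ is orthonormal, and $\mathcal Z=\operatorname{span}(Z)$ the center. Let $\times$ denote the cross product on $\mathcal N$ with respect to $\langle\cdot,\cdot\rangle$ and the orientation with $X\times Y=Z$. Fix $0<\xi<1$, put $X_0=\xi Z$, and consider the Randers Minkowski functional $f(U)=\sqrt{\langle U,U\rangle}+\langle X_0,U\rangle$ on $\mathcal N$ (extended by left translations to a left invariant Randers metric on the Heisenberg group). For nonzero $W\in\mathcal N$ define the osculating inner product $\langle U,V\rangle_W=\frac12\frac{\partial^2}{\partial s\,\partial t}f^2(W+sU+tV)\big|_{s=t=0}$ and the Cartan tensor $\mathcal C_W(U,V,T)=\frac14\frac{\partial^3}{\partial r\,\partial s\,\partial t}f^2(W+rU+sV+tT)\big|_{r=s=t=0}$. Define $\mathcal C^2_W(U,V)\in\mathcal N$ by requiring $\langle \mathcal C^2_W(U,V),T\rangle_W=\mathcal C_W(U,V,T)$ for all $T$. The Cartan vector $C_W$ is the unique vector with $\langle S,C_W\rangle_W=\operatorname{trace}\big(U\mapsto \mathcal C^2_W(S,U)\big)$ for all $S\in\mathcal N$; it is nonzero when $W\notin\mathcal Z$. Berwald–Moór frame vectors: $E_1=W/\sqrt{\langle W,W\rangle_W}$ and $E_2=C_W/\sqrt{\langle C_W,C_W\rangle_W}$. The (left invariant)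 Chern–Rund connection with reference vector $W$ is the bilinear map $\nabla^W:\mathcal N\times\mathcal N\to\mathcal N$ determined by: for all $U,V,T\in\mathcal N$, $$2\langle\nabla^W_UV,T\rangle_W=\langle[U,V],T\rangle_W-\langle[V,T],U\rangle_W+\langle[T,U],V\rangle_W-2\mathcal C_W(\nabla^W_UW,V,T)-2\mathcal C_W(\nabla^W_VW,T,U)+2\mathcal C_W(\nabla^W_TW,U,V).$$ *)

(* Defs.v *)
From Stdlib Require Import Reals Lra ClassicalEpsilon.
Open Scope R_scope.

(** Vectors of the Heisenberg algebra N, in coordinates w.r.t. the basis (X,Y,Z). *)
Record vec := mkV { vx : R ; vy : R ; vz : R }.

Definition vadd (U V : vec) : vec := mkV (vx U + vx V) (vy U + vy V) (vz U + vz V).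
Definition vscal (c : R) (U : vec) : vec := mkV (c * vx U) (c * vy U) (c * vz U).
Definition vopp (U : vec) : vec := vscal (-1) U.

Definition eX : vec := mkV 1 0 0.
Definition eY : vec := mkV 0 1 0.
Definition eZ : vec := mkV 0 0 1.

Definition bracket (U V : vec) : vec := mkV 0 0 (vx U * vy V - vy U * vx V).

Definition dot (U V : vec) : R := vx U * vx V + vy U * vy V + vz U * vz V.

Definition cross (U V : vec) : vec :=
  mkV (vy U * vz V - vz U * vy V) (vz U * vx V - vx U * vz V) (vx U * vy V - vy U * vx V).

Definition X0 (xi : R) : vec := vscal xi eZ.
Definition randers (xi : R) (U : vec) : R := sqrt (dot U U) + dot (X0 xi) U.
Definition F2 (xi : R) (U : vec) : R := (randers xi U) ^ 2.

(** Iterated partial derivatives at the origin: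
    has_d2 F a : a = d/ds (d/dt F s t |_{t=0}) |_{s=0}
    has_d3 F a : a = d/dr (d/ds (d/dt F r s t |_{t=0}) |_{s=0}) |_{r=0}  *)
Definition has_d2 (F : R -> R -> R) (a : R) : Prop :=
  exists (G : R -> R) (d : R), 0 < d /\
    (forall s, Rabs s < d -> derivable_pt_lim (fun t => F s t) 0 (G s)) /\
    derivable_pt_lim G 0 a.

Definition has_d3 (F : R -> R -> R -> R) (a : R) : Prop :=
  exists (H : R -> R -> R) (G : R -> R) (d : R), 0 < d /\
    (forall r s, Rabs r < d -> Rabs s < d ->
        derivable_pt_lim (fun t => F r s t) 0 (H r s)) /\
    (forall r, Rabs r < d -> derivable_pt_lim (fun s => H r s) 0 (G r)) /\
    derivable_pt_lim G 0 a.

Definition inhR : inhabited R := inhabits 0.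
Definition inhV : inhabited vec := inhabits (mkV 0 0 0).

(** Osculating inner product <U,V>_W = 1/2 d^2/dsdt f^2(W+sU+tV) at 0. *)
Definition oip (xi : R) (W U V : vec) : R :=
  epsilon inhR (fun a => exists d,
    has_d2 (fun s t => F2 xi (vadd W (vadd (vscal s U) (vscal t V)))) d /\ a = d / 2).

(** Cartan tensor C_W(U,V,T) = 1/4 d^3/drdsdt f^2(W+rU+sV+tT) at 0. *)
Definition cartan (xi : R) (W U V T : vec) : R :=
  epsilon inhR (fun a => exists d,
    has_d3 (fun r s t =>
      F2 xi (vadd W (vadd (vscal r U) (vadd (vscal s V) (vscal t T))))) d /\ a = d / 4).

Definition C2 (xi : R) (W U V : vec) : vec :=
  epsilon inhV (fun X => forall T, oip xi W X T = cartan xi W U V T).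

Definition trace (L : vec -> vec) : R := vx (L eX) + vy (L eY) + vz (L eZ).

Definition cartan_vec (xi : R) (W : vec) : vec :=
  epsilon inhV (fun C => forall S, oip xi W S C = trace (fun U => C2 xi W S U)).

Definition BM_E1 (xi : R) (W : vec) : vec := vscal (/ sqrt (oip xi W W W)) W.
Definition BM_E2 (xi : R) (W : vec) : vec :=
  let C := cartan_vec xi W in vscal (/ sqrt (oip xi W C C)) C.
Definition BM_E3 (xi : R) (W : vec) : vec := cross W (BM_E2 xi W).

Definition bilinear (B : vec -> vec -> vec) : Prop :=
  (forall U U' V, B (vadd U U') V = vadd (B U V) (B U' V)) /\
  (forall c U V, B (vscal c U) V = vscal c (B U V)) /\
  (forall U V V', B U (vadd V V') = vadd (B U V) (B U V')) /\
  (forall c U V, B U (vscal c V) = vscal c (B U V)).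

Definition chern_rund_eq (xi : R) (W : vec) (nab : vec -> vec -> vec) : Prop :=
  forall U V T,
    2 * oip xi W (nab U V) T =
      oip xi W (bracket U V) T - oip xi W (bracket V T) U + oip xi W (bracket T U) V
      - 2 * cartan xi W (nab U W) V T - 2 * cartan xi W (nab V W) T U
      + 2 * cartan xi W (nab T W) U V.

Definition wnum (xi : R) (W : vec) : R := sqrt (oip xi W W W).

Definition f1 (xi : R) (W : vec) : R :=
  oip xi W (bracket (BM_E3 xi W) (BM_E1 xi W)) W.

Definition f2 (xi : R) (W : vec) : R :=
  (oip xi W (bracket (BM_E3 xi W) W) (BM_E2 xi W) + oip xi W (bracket (BM_E3 xi W) (BM_E2 xi W)) W
   - oip xi W (bracket (BM_E3 xi W) W) W * dot (X0 xi) (BM_E2 xi W)) / 2.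

Definition f3 (xi : R) (W : vec) : R :=
  (oip xi W (bracket (BM_E3 xi W) W) (BM_E2 xi W) + oip xi W (bracket (BM_E2 xi W) (BM_E3 xi W)) W
   - oip xi W (bracket (BM_E3 xi W) W) W * dot (X0 xi) (BM_E2 xi W)) / 2.

Definition f4 (xi : R) (W : vec) : R :=
  - (f1 xi W / wnum xi W) - f2 xi W * dot (X0 xi) (BM_E2 xi W)
  + 3 * wnum xi W / 4 * dot (X0 xi) (BM_E2 xi W).

Definition f5 (xi : R) (W : vec) : R :=
  oip xi W (bracket (BM_E2 xi W) (BM_E3 xi W)) (BM_E2 xi W)
  - 3 / 2 * f3 xi W * dot (X0 xi) (BM_E2 xi W).

(* Main.v *)
Require Import Defs.
From Stdlib Require Import Reals Lra Nsatz ClassicalEpsilon.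
From Coquelicot Require Import Coquelicot.
Require Import Defs.
Open Scope R_scope.

Definition gradF (xi : R) (Y V : vec) : R :=
  2 * (sqrt (dot Y Y) + xi * vz Y) * (dot Y V / sqrt (dot Y Y) + xi * vz V).
Definition gY (xi : R) (Y U V : vec) : R :=
  let a := sqrt (dot Y Y) in
  (dot Y U / a + xi * vz U) * (dot Y V / a + xi * vz V) +
  (a + xi * vz Y) * (dot U V / a - dot Y U * dot Y V / (a*a*a)).
Definition C3 (xi : R) (Y U V T : vec) : R :=
  let a := sqrt (dot Y Y) in
  let hA := fun P Q => dot P Q - dot Y P * dot Y Q / (a*a) in
  let mA := fun P => xi * vz P - xi * vz Y * dot Y P / (a*a) in
  (hA U V * mA T + hA V T * mA U + hA T U * mA V) / a.

Lemma D1 xi Y V : 0 < dot Y Y ->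
  is_derive (fun t => F2 xi (vadd Y (vscal t V))) 0 (gradF xi Y V).
Proof.
  intros HY. destruct Y as [y1 y2 y3]; destruct V as [v1 v2 v3].
  unfold F2, randers, gradF, dot, vadd, vscal, X0, eZ in *; simpl in *.
  assert (sqrt (y1 * y1 + y2 * y2 + y3 * y3) <> 0) by (apply Rgt_not_eq, sqrt_lt_R0; lra).
  auto_derive; rewrite ?Rmult_0_l, ?Rplus_0_r; [tauto|]. field; auto.
Qed.

Lemma D2 xi Y U V : 0 < dot Y Y ->
  is_derive (fun s => gradF xi (vadd Y (vscal s U)) V) 0 (2 * gY xi Y U V).
Proof.
  intros HY. destruct Y as [y1 y2 y3]; destruct V as [v1 v2 v3]; destruct U as [u1 u2 u3].
  unfold gY, gradF, dot, vadd, vscal in *; simpl in *.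
  assert (sqrt (y1 * y1 + y2 * y2 + y3 * y3) <> 0) by (apply Rgt_not_eq, sqrt_lt_R0; lra).
  auto_derive; rewrite ?Rmult_0_l, ?Rplus_0_r; [tauto|]. field; auto.
Qed.

Lemma D3 xi Y U V T : 0 < dot Y Y ->
  is_derive (fun r => gY xi (vadd Y (vscal r U)) V T) 0 (C3 xi Y U V T).
Proof.
  intros HY. destruct Y as [y1 y2 y3]; destruct V as [v1 v2 v3]; destruct U as [u1 u2 u3];
  destruct T as [t1 t2 t3].
  unfold C3, gY, dot, vadd, vscal in *; simpl in *.
  assert (sqrt (y1 * y1 + y2 * y2 + y3 * y3) <> 0) by (apply Rgt_not_eq, sqrt_lt_R0; lra).
  auto_derive; rewrite ?Rmult_0_l, ?Rplus_0_r.
  - repeat split; try assumption; repeat (apply Rmult_integral_contrapositive_currified; try assumption).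
  - field; auto.
Qed.

Lemma vec_eq (U V : vec) : vx U = vx V -> vy U = vy V -> vz U = vz V -> U = V.
Proof. destruct U, V; simpl; intros; subst; reflexivity. Qed.

Lemma ball0 (e : posreal) s : ball 0 e s -> Rabs s < e.
Proof. intros H. change (Rabs (s - 0) < e) in H. rewrite Rminus_0_r in H. exact H. Qed.

Lemma deriv_uniq_loc (f g : R -> R) d l1 l2 : 0 < d ->
  (forall s, Rabs s < d -> f s = g s) ->
  derivable_pt_lim f 0 l1 -> derivable_pt_lim g 0 l2 -> l1 = l2.
Proof.
  intros Hd Hfg H1 H2. apply is_derive_Reals in H1. apply is_derive_Reals in H2.
  assert (H3 : is_derive g 0 l1).
  { apply (is_derive_ext_loc f g 0 l1); [|exact H1].
    exists (mkposreal d Hd). intros s Hs. apply Hfg. apply (ball0 (mkposreal d Hd)). exact Hs. }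
  apply is_derive_unique in H2. apply is_derive_unique in H3. congruence.
Qed.

Lemma has_d2_unique F a1 a2 : has_d2 F a1 -> has_d2 F a2 -> a1 = a2.
Proof.
  intros [G1 [d1 [Hd1 [HG1 HG1']]]] [G2 [d2 [Hd2 [HG2 HG2']]]].
  apply (deriv_uniq_loc G1 G2 (Rmin d1 d2)); auto.
  - apply Rmin_pos; auto.
  - intros s Hs. apply (uniqueness_limite (fun t => F s t) 0).
    + apply HG1. apply Rlt_le_trans with (1 := Hs). apply Rmin_l.
    + apply HG2. apply Rlt_le_trans with (1 := Hs). apply Rmin_r.
Qed.

Lemma has_d3_unique F a1 a2 : has_d3 F a1 -> has_d3 F a2 -> a1 = a2.
Proof.
  intros [H1 [G1 [d1 [Hd1 [HH1 [HG1 HG1']]]]]] [H2 [G2 [d2 [Hd2 [HH2 [HG2 HG2']]]]]].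
  assert (Hm : 0 < Rmin d1 d2) by (apply Rmin_pos; auto).
  assert (L1 : forall x, Rabs x < Rmin d1 d2 -> Rabs x < d1)
    by (intros x Hx; apply Rlt_le_trans with (1 := Hx); apply Rmin_l).
  assert (L2 : forall x, Rabs x < Rmin d1 d2 -> Rabs x < d2)
    by (intros x Hx; apply Rlt_le_trans with (1 := Hx); apply Rmin_r).
  apply (deriv_uniq_loc G1 G2 (Rmin d1 d2)); auto.
  intros r Hr.
  apply (deriv_uniq_loc (fun s => H1 r s) (fun s => H2 r s) (Rmin d1 d2)); auto.
  intros s Hs. apply (uniqueness_limite (fun t => F r s t) 0); auto.
Qed.

Lemma abs_le1 x : x * x <= 1 -> Rabs x <= 1.
Proof. intros H. apply Rabs_le. split; nra. Qed.

Lemma pos_small W Z : dot W W = 1 ->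
  Rabs (vx Z) < 1/8 -> Rabs (vy Z) < 1/8 -> Rabs (vz Z) < 1/8 ->
  0 < dot (vadd W Z) (vadd W Z).
Proof.
  intros HW h1 h2 h3. destruct W as [a b c]; destruct Z as [x y z]; unfold dot, vadd in *; simpl in *.
  assert (Ha : Rabs a <= 1) by (apply abs_le1; nra).
  assert (Hb : Rabs b <= 1) by (apply abs_le1; nra).
  assert (Hc : Rabs c <= 1) by (apply abs_le1; nra).
  assert (forall p q, Rabs p <= 1 -> - Rabs q <= p * q).
  { intros p q Hp. assert (Rabs (p*q) <= Rabs q).
    { rewrite Rabs_mult. rewrite <- (Rmult_1_l (Rabs q)) at 2.
      apply Rmult_le_compat_r; auto. apply Rabs_pos. }
    pose proof (Rabs_le_between' (p*q) (Rabs (p*q))) as Hh. 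
    pose proof (Rle_abs (-(p*q))) as Hk. rewrite Rabs_Ropp in Hk. lra. }
  pose proof (H a x Ha). pose proof (H b y Hb). pose proof (H c z Hc).
  assert ((a + x) * (a + x) + (b + y) * (b + y) + (c + z) * (c + z) =
     (a*a+b*b+c*c) + 2*(a*x+b*y+c*z) + (x*x+y*y+z*z)) by ring.
  rewrite H3, HW. nra.
Qed.

Lemma small2 r s u v d : Rabs r < d -> Rabs s < d -> d * (Rabs u + Rabs v) < 1/8 ->
  Rabs (r*u + s*v) < 1/8.
Proof.
  intros Hr Hs Hd. eapply Rle_lt_trans; [apply Rabs_triang|]. rewrite !Rabs_mult.
  assert (Rabs r * Rabs u <= d * Rabs u) by (apply Rmult_le_compat_r; [apply Rabs_pos|lra]).
  assert (Rabs s * Rabs v <= d * Rabs v) by (apply Rmult_le_compat_r; [apply Rabs_pos|lra]).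
  lra.
Qed.

Definition sumabs (U : vec) := Rabs (vx U) + Rabs (vy U) + Rabs (vz U).

Lemma pos_near W U V : dot W W = 1 -> exists d, 0 < d /\ forall r s, Rabs r < d -> Rabs s < d ->
  0 < dot (vadd W (vadd (vscal r U) (vscal s V))) (vadd W (vadd (vscal r U) (vscal s V))).
Proof.
  intros HW. set (S := 1 + sumabs U + sumabs V).
  assert (HS : 1 <= S).
  { unfold S, sumabs. pose proof (Rabs_pos (vx U)). pose proof (Rabs_pos (vy U)).
    pose proof (Rabs_pos (vz U)). pose proof (Rabs_pos (vx V)). pose proof (Rabs_pos (vy V)).
    pose proof (Rabs_pos (vz V)). lra. }
  exists (/ (8 * S)). split. { apply Rinv_0_lt_compat. lra. }
  intros r s Hr Hs.
  assert (K : forall p q, Rabs p + Rabs q <= S - 1 -> / (8*S) * (Rabs p + Rabs q) < 1/8).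
  { intros p q Hpq. apply Rle_lt_trans with (/ (8*S) * (S-1)).
    - apply Rmult_le_compat_l; auto. left; apply Rinv_0_lt_compat; lra.
    - apply Rmult_lt_reg_l with (8*S); [lra|]. rewrite <- Rmult_assoc, Rinv_r; lra. }
  unfold S, sumabs in *.
  pose proof (Rabs_pos (vx U)). pose proof (Rabs_pos (vy U)).
  pose proof (Rabs_pos (vz U)). pose proof (Rabs_pos (vx V)). pose proof (Rabs_pos (vy V)).
  pose proof (Rabs_pos (vz V)).
  apply pos_small; auto; simpl; apply (small2 r s _ _ (/ (8 * S))); auto; apply K; unfold S, sumabs; lra.
Qed.

Lemma vassoc A B C : vadd A (vadd B C) = vadd (vadd A B) C.
Proof. apply vec_eq; simpl; ring. Qed.

Lemma pos1 W U : dot W W = 1 -> exists d, 0 < d /\ forall s, Rabs s < d ->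
  0 < dot (vadd W (vscal s U)) (vadd W (vscal s U)).
Proof.
  intros HW. destruct (pos_near W U U HW) as [d [Hd H]]. exists d; split; auto.
  intros s Hs. assert (E : vadd W (vscal s U) = vadd W (vadd (vscal s U) (vscal 0 U)))
    by (apply vec_eq; simpl; ring).
  rewrite E. apply H; auto. rewrite Rabs_R0; auto.
Qed.

Lemma has_d2_ex xi W U V : dot W W = 1 ->
  has_d2 (fun s t => F2 xi (vadd W (vadd (vscal s U) (vscal t V)))) (2 * gY xi W U V).
Proof.
  intros HW. destruct (pos1 W U HW) as [d [Hd Hp]].
  exists (fun s => gradF xi (vadd W (vscal s U)) V), d. split; [auto|split].
  - intros s Hs. apply is_derive_Reals.
    apply (is_derive_ext (fun t => F2 xi (vadd (vadd W (vscal s U)) (vscal t V)))).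
    + intros t. rewrite vassoc. reflexivity.
    + apply D1. auto.
  - apply is_derive_Reals. apply D2. rewrite HW; lra.
Qed.

Lemma has_d3_ex xi W U V T : dot W W = 1 ->
  has_d3 (fun r s t => F2 xi (vadd W (vadd (vscal r U) (vadd (vscal s V) (vscal t T)))))
    (2 * C3 xi W U V T).
Proof.
  intros HW. destruct (pos_near W U V HW) as [d [Hd Hp]].
  exists (fun r s => gradF xi (vadd (vadd W (vscal r U)) (vscal s V)) T),
    (fun r => 2 * gY xi (vadd W (vscal r U)) V T), d.
  split; [auto|split; [|split]].
  - intros r s Hr Hs. apply is_derive_Reals.
    apply (is_derive_ext (fun t => F2 xi (vadd (vadd (vadd W (vscal r U)) (vscal s V)) (vscal t T)))).
    + intros t. f_equal. apply vec_eq; simpl; ring.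
    + apply D1. rewrite <- vassoc. auto.
  - intros r Hr. apply is_derive_Reals. apply D2.
    assert (E : vadd W (vscal r U) = vadd W (vadd (vscal r U) (vscal 0 V)))
      by (apply vec_eq; simpl; ring).
    rewrite E. apply Hp; auto. rewrite Rabs_R0; auto.
  - apply is_derive_Reals. apply is_derive_scal. apply D3. rewrite HW; lra.
Qed.

Lemma oip_gY xi W U V : dot W W = 1 -> oip xi W U V = gY xi W U V.
Proof.
  intros HW. unfold oip.
  set (P := fun a => exists d, has_d2 (fun s t => F2 xi (vadd W (vadd (vscal s U) (vscal t V)))) d /\ a = d / 2).
  assert (HP : P (gY xi W U V)).
  { exists (2 * gY xi W U V). split. apply has_d2_ex; auto. field. }
  destruct (epsilon_spec inhR P (ex_intro _ _ HP)) as [d [Hd E]].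
  rewrite E. rewrite (has_d2_unique _ _ _ Hd (has_d2_ex xi W U V HW)). field.
Qed.

Lemma cartan_C3 xi W U V T : dot W W = 1 -> cartan xi W U V T = C3 xi W U V T / 2.
Proof.
  intros HW. unfold cartan.
  set (P := fun a => exists d, has_d3 (fun r s t =>
      F2 xi (vadd W (vadd (vscal r U) (vadd (vscal s V) (vscal t T))))) d /\ a = d / 4).
  assert (HP : P (C3 xi W U V T / 2)).
  { exists (2 * C3 xi W U V T). split. apply has_d3_ex; auto. field. }
  destruct (epsilon_spec inhR P (ex_intro _ _ HP)) as [d [Hd E]].
  rewrite E. rewrite (has_d3_unique _ _ _ Hd (has_d3_ex xi W U V T HW)). field.
Qed.

Definition hh (W X Y : vec) := dot X Y - dot W X * dot W Y.
Definition mm xi (W X : vec) := xi * vz X - xi * vz W * dot W X.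
Definition gf xi W X Y := (dot W X + xi * vz X) * (dot W Y + xi * vz Y) + (1 + xi * vz W) * hh W X Y.
Definition Cf xi W X Y Z := (hh W X Y * mm xi W Z + hh W Y Z * mm xi W X + hh W Z X * mm xi W Y) / 2.

Lemma oip_gf xi W U V : dot W W = 1 -> oip xi W U V = gf xi W U V.
Proof.
  intros HW. rewrite oip_gY; auto. unfold gY, gf, hh. rewrite HW, sqrt_1. field.
Qed.

Lemma cartan_Cf xi W U V T : dot W W = 1 -> cartan xi W U V T = Cf xi W U V T.
Proof.
  intros HW. rewrite cartan_C3; auto. unfold C3, Cf, hh, mm. rewrite HW, sqrt_1. field.
Qed.

Record fv := FV { p1 : R ; p2 : R ; p3 : R }.

Definition comb (W : vec) (x : fv) : vec :=
  mkV (p1 x * vx W + p3 x * vy W) (p1 x * vy W - p3 x * vx W) (p1 x * vz W + p2 x).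

Section Frame.
Variables (xi c : R).
Definition FF := 1 + xi * c.
Definition kk := c + xi.
Definition rho := 1 - c * c.
Definition ellF x := FF * p1 x + kk * p2 x.
Definition hF x y := rho * (p2 x * p2 y + p3 x * p3 y).
Definition mF x := xi * rho * p2 x.
Definition gF x y := ellF x * ellF y + FF * hF x y.
Definition CF x y z := (hF x y * mF z + hF y z * mF x + hF z x * mF y) / 2.
Definition brF x y := FV 0 (- (p1 x * p3 y - p3 x * p1 y) * rho) 0.
Definition crF y := FV (c * p3 y) (- p3 y) (p2 y).
Definition raiseF f2 f3 := FV (- kk * f2 / (FF * FF * rho)) (f2 / (FF * rho)) (f3 / (FF * rho)).
Definition KF u := FV (- kk * p3 u / 2) (FF * p3 u / 2) (kk * p1 u + FF * p2 u / 2).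
End Frame.

Definition e0 := FV 1 0 0.
Definition addF x y := FV (p1 x + p1 y) (p2 x + p2 y) (p3 x + p3 y).
Definition scF k x := FV (k * p1 x) (k * p2 x) (k * p3 x).

Section Trans.
Variables (xi : R) (W : vec).
Hypothesis HW : dot W W = 1.
Hypothesis HWZ : ~ (vx W = 0 /\ vy W = 0).
Local Notation c := (vz W).

Lemma Hab : vx W * vx W + vy W * vy W = 1 - c * c.
Proof. unfold dot in HW. lra. Qed.

Lemma rho_pos : 0 < rho c.
Proof.
  unfold rho. rewrite <- Hab. destruct (Req_dec (vx W) 0); destruct (Req_dec (vy W) 0).
  - exfalso; tauto.
  - nra. - nra. - nra.
Qed.

Lemma c_bound : c * c <= 1.
Proof. pose proof Hab. nra. Qed.

Hypothesis Hxi : 0 < xi < 1.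

Lemma FF_pos : 0 < FF xi c.
Proof.
  unfold FF. pose proof c_bound. assert (-1 <= c) by nra.
  destruct (Rle_dec 0 c); nra.
Qed.

Lemma dot_comm X Y : dot X Y = dot Y X.
Proof. unfold dot; ring. Qed.

Lemma dotW_comb x : dot W (comb W x) = p1 x + c * p2 x.
Proof.
  transitivity (p1 x * dot W W + c * p2 x); [unfold dot, comb; simpl; ring|]. rewrite HW; ring.
Qed.

Lemma dot_comb x y : dot (comb W x) (comb W y) =
  p1 x * p1 y + c * (p1 x * p2 y + p2 x * p1 y) + p2 x * p2 y + rho c * p3 x * p3 y.
Proof.
  transitivity (p1 x * p1 y * dot W W + c * (p1 x * p2 y + p2 x * p1 y) + p2 x * p2 y
     + (vx W * vx W + vy W * vy W) * p3 x * p3 y); [unfold dot, comb; simpl; ring|].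
  rewrite HW, Hab. unfold rho; ring.
Qed.

Lemma vz_comb x : vz (comb W x) = p1 x * c + p2 x.
Proof. reflexivity. Qed.

Lemma hh_comb x y : hh W (comb W x) (comb W y) = hF c x y.
Proof. unfold hh. rewrite dot_comb, !dotW_comb. unfold hF, rho. ring. Qed.

Lemma mm_comb x : mm xi W (comb W x) = mF xi c x.
Proof. unfold mm. rewrite dotW_comb, vz_comb. unfold mF, rho. ring. Qed.

Lemma gf_comb x y : gf xi W (comb W x) (comb W y) = gF xi c x y.
Proof.
  unfold gf. rewrite hh_comb, !dotW_comb, !vz_comb. unfold gF, ellF, FF, kk. ring.
Qed.

Lemma Cf_comb x y z : Cf xi W (comb W x) (comb W y) (comb W z) = CF xi c x y z.
Proof. unfold Cf, CF. rewrite !hh_comb, !mm_comb. reflexivity. Qed.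

Lemma Wc : comb W e0 = W.
Proof. apply vec_eq; unfold comb, e0; simpl; ring. Qed.

Lemma br_comb x y : bracket (comb W x) (comb W y) = comb W (brF c x y).
Proof.
  apply vec_eq; unfold comb, brF, bracket; simpl; try ring.
  unfold rho. rewrite <- Hab. ring.
Qed.

Lemma cr_comb y : cross W (comb W y) = comb W (crF c y).
Proof.
  apply vec_eq; unfold comb, crF, cross; simpl; try ring.
  replace (c * p3 y * c + - p3 y) with (- p3 y * (1 - c * c)) by ring. rewrite <- Hab. ring.
Qed.

Lemma add_comb x y : vadd (comb W x) (comb W y) = comb W (addF x y).
Proof. apply vec_eq; unfold comb, addF; simpl; ring. Qed.

Lemma sc_comb k x : vscal k (comb W x) = comb W (scF k x).
Proof. apply vec_eq; unfold comb, scF; simpl; ring. Qed.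

Lemma X0_dot x : dot (X0 xi) (comb W x) = xi * (p1 x * c + p2 x).
Proof. unfold dot, X0, eZ, comb; simpl; ring. Qed.

Definition coordF (X : vec) : fv :=
  FV ((dot W X - c * vz X) / rho c) ((vz X - c * dot W X) / rho c)
     ((vy W * vx X - vx W * vy X) / rho c).

Lemma coord_comb X : X = comb W (coordF X).
Proof.
  pose proof rho_pos as Hr. pose proof Hab as Hh.
  destruct X as [x y z]. unfold comb, coordF, dot; simpl.
  apply vec_eq; simpl.
  - unfold rho in *. rewrite <- Hh in *. field. lra.
  - unfold rho in *. rewrite <- Hh in *. field. lra.
  - unfold rho in *. field. lra.
Qed.

Lemma fv_eq x y : p1 x = p1 y -> p2 x = p2 y -> p3 x = p3 y -> x = y.
Proof. destruct x, y; simpl; intros; subst; reflexivity. Qed.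

Lemma nondegF x y : (forall t, gF xi c x t = gF xi c y t) -> x = y.
Proof.
  intros H. pose proof rho_pos as Hr0. pose proof FF_pos as HF0.
  pose proof (H (FV 1 0 0)) as H1. pose proof (H (FV 0 1 0)) as H2. pose proof (H (FV 0 0 1)) as H3.
  unfold gF, ellF, hF in *; simpl in *.
  assert (E3 : p3 x = p3 y).
  { apply Rmult_eq_reg_l with (FF xi c * rho c); [|apply Rgt_not_eq; apply Rmult_lt_0_compat; auto].
    nra. }
  assert (E1 : FF xi c * p1 x + kk xi c * p2 x = FF xi c * p1 y + kk xi c * p2 y).
  { apply Rmult_eq_reg_l with (FF xi c); [|lra]. nra. }
  assert (E2 : p2 x = p2 y).
  { apply Rmult_eq_reg_l with (FF xi c * rho c); [|apply Rgt_not_eq; apply Rmult_lt_0_compat; auto].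
    rewrite E1 in H2. nra. }
  apply fv_eq; auto. rewrite E2 in E1. apply Rmult_eq_reg_l with (FF xi c); [|lra]. lra.
Qed.

Lemma nondeg X y : (forall t, gf xi W X (comb W t) = gF xi c y t) -> X = comb W y.
Proof.
  intros H. rewrite (coord_comb X) in *. f_equal. apply nondegF. intros t.
  rewrite <- H. rewrite gf_comb. reflexivity.
Qed.

Lemma gf_sym X Y : gf xi W X Y = gf xi W Y X.
Proof. unfold gf, hh. rewrite (dot_comm X Y). ring. Qed.

Lemma hhW1 X : hh W W X = 0.
Proof. unfold hh. rewrite HW. ring. Qed.
Lemma hhW2 X : hh W X W = 0.
Proof. unfold hh. rewrite HW, dot_comm. ring. Qed.
Lemma mmW : mm xi W W = 0.
Proof. unfold mm. rewrite HW. ring. Qed.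
Lemma CfW2 X Z : Cf xi W X W Z = 0.
Proof. unfold Cf. rewrite ?hhW1, ?hhW2, ?mmW. rewrite ?Rmult_0_l, ?Rmult_0_r, ?Rplus_0_r, ?Rplus_0_l. unfold Rdiv. apply Rmult_0_l. Qed.
Lemma CfW3 X Z : Cf xi W X Z W = 0.
Proof. unfold Cf. rewrite ?hhW1, ?hhW2, ?mmW. rewrite ?Rmult_0_l, ?Rmult_0_r, ?Rplus_0_r, ?Rplus_0_l. unfold Rdiv. apply Rmult_0_l. Qed.

End Trans.

Definition raiseC xi c s u :=
  raiseF xi c ((hF c s u * (xi * rho c) + rho c * p2 u * mF xi c s + rho c * p2 s * mF xi c u) / 2)
              ((rho c * p3 u * mF xi c s + rho c * p3 s * mF xi c u) / 2).

Lemma raiseC_ok xi c s u t : FF xi c <> 0 -> rho c <> 0 ->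
  gF xi c (raiseC xi c s u) t = CF xi c s u t.
Proof. intros. unfold raiseC, raiseF, gF, CF, ellF, hF, mF; simpl. field; auto. Qed.

Lemma trace_alg a b c xi s1 s2 s3 : a * a + b * b = 1 - c * c -> FF xi c <> 0 -> rho c <> 0 ->
  let W := mkV a b c in let s := FV s1 s2 s3 in
  let co := fun X : vec => FV ((dot W X - c * vz X) / rho c) ((vz X - c * dot W X) / rho c)
     ((vy W * vx X - vx W * vy X) / rho c) in
  vx (comb W (raiseC xi c s (co eX))) + vy (comb W (raiseC xi c s (co eY)))
   + vz (comb W (raiseC xi c s (co eZ))) = 2 * mF xi c s / FF xi c.
Proof.
  intros Hab HF Hr. simpl. unfold raiseC, raiseF, comb, dot, hF, mF, rho in *; simpl.
  unfold FF, kk in *.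
  field_simplify_eq; auto.
  replace (a ^ 2) with (1 - c * c - b ^ 2) by (rewrite <- Hab; ring). ring.
Qed.

Section Cartan.
Variables (xi : R) (W : vec).
Hypothesis HW : dot W W = 1.
Hypothesis HWZ : ~ (vx W = 0 /\ vy W = 0).
Hypothesis Hxi : 0 < xi < 1.
Local Notation c := (vz W).

Lemma Fnz : FF xi c <> 0.
Proof. apply Rgt_not_eq. apply FF_pos; auto. Qed.
Lemma rnz : rho c <> 0.
Proof. apply Rgt_not_eq. apply (rho_pos W); auto. Qed.

Lemma C2_comb s u : C2 xi W (comb W s) (comb W u) = comb W (raiseC xi c s u).
Proof.
  unfold C2.
  set (P := fun X => forall T, oip xi W X T = cartan xi W (comb W s) (comb W u) T).
  assert (HP : P (comb W (raiseC xi c s u))).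
  { intros T. rewrite oip_gf, cartan_Cf; auto. rewrite (coord_comb W HW HWZ T).
    rewrite gf_comb, Cf_comb; auto. apply raiseC_ok; [apply Fnz | apply rnz]. }
  pose proof (epsilon_spec inhV P (ex_intro _ _ HP)) as HX.
  apply (nondeg xi W HW HWZ Hxi). intros t. rewrite <- oip_gf; auto. rewrite HX.
  rewrite cartan_Cf, Cf_comb; auto. symmetry. apply raiseC_ok; [apply Fnz | apply rnz].
Qed.

Lemma trace_comb s : trace (fun U => C2 xi W (comb W s) U) = 2 * mF xi c s / FF xi c.
Proof.
  unfold trace. rewrite (coord_comb W HW HWZ eX) at 1. rewrite (coord_comb W HW HWZ eY) at 1.
  rewrite (coord_comb W HW HWZ eZ) at 1. rewrite !C2_comb.
  pose proof (Hab W HW) as Hh. destruct s as [s1 s2 s3].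
  pose proof (trace_alg (vx W) (vy W) c xi s1 s2 s3 Hh Fnz rnz) as T. simpl in T.
  destruct W as [a b cc]. unfold coordF. simpl in *. exact T.
Qed.

Definition cvF := raiseF xi c (2 * xi * rho c / FF xi c) 0.

Lemma cv_comb : cartan_vec xi W = comb W cvF.
Proof.
  unfold cartan_vec.
  set (P := fun C => forall S, oip xi W S C = trace (fun U => C2 xi W S U)).
  assert (HP : P (comb W cvF)).
  { intros S. rewrite oip_gf; auto. rewrite (coord_comb W HW HWZ S).
    rewrite gf_comb, trace_comb; auto. pose proof Fnz; pose proof rnz.
    unfold cvF, raiseF, gF, ellF, hF, mF; simpl. field; auto. }
  pose proof (epsilon_spec inhV P (ex_intro _ _ HP)) as HX.
  apply (nondeg xi W HW HWZ Hxi). intros t. rewrite gf_sym. rewrite <- oip_gf; auto. rewrite HX.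
  rewrite trace_comb. pose proof Fnz; pose proof rnz.
  unfold cvF, raiseF, gF, ellF, hF, mF; simpl. field; auto.
Qed.

End Cartan.

Section Alg.
Variables (xi c q : R).
Hypothesis HF : FF xi c <> 0.
Hypothesis Hr : rho c <> 0.
Hypothesis Hx : xi <> 0.
Hypothesis Hq : q ^ 2 = FF xi c ^ 3 / (4 * xi ^ 2 * rho c).

Definition cvA := raiseF xi c (2 * xi * rho c / FF xi c) 0.
Definition E1f := FV (/ FF xi c) 0 0.
Definition E2f := scF q cvA.
Definition E3f := crF c E2f.
Definition X0E2 := xi * (p1 E2f * c + p2 E2f).
Definition f1F := gF xi c (brF c E3f E1f) e0.
Definition f2F := (gF xi c (brF c E3f e0) E2f + gF xi c (brF c E3f E2f) e0
   - gF xi c (brF c E3f e0) e0 * X0E2) / 2.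
Definition f3F := (gF xi c (brF c E3f e0) E2f + gF xi c (brF c E2f E3f) e0
   - gF xi c (brF c E3f e0) e0 * X0E2) / 2.
Definition f4F := - (f1F / FF xi c) - f2F * X0E2 + 3 * FF xi c / 4 * X0E2.
Definition f5F := gF xi c (brF c E2f E3f) E2f - 3 / 2 * f3F * X0E2.

Definition CRid u v r := forall t,
  2 * gF xi c r t = gF xi c (brF c u v) t - gF xi c (brF c v t) u + gF xi c (brF c t u) v
   - 2 * CF xi c (KF xi c u) v t - 2 * CF xi c (KF xi c v) t u + 2 * CF xi c (KF xi c t) u v.

Lemma q3 : q ^ 3 = q * q ^ 2. Proof. ring. Qed.
Lemma q4 : q ^ 4 = q ^ 2 * q ^ 2. Proof. ring. Qed.
Lemma q5 : q ^ 5 = q * q ^ 2 * q ^ 2. Proof. ring. Qed.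
Lemma q6 : q ^ 6 = q ^ 2 * q ^ 2 * q ^ 2. Proof. ring. Qed.

Ltac crtac := intros [t1 t2 t3];
  unfold f4F, f5F, f1F, f2F, f3F, X0E2, E1f, E2f, E3f, cvA, raiseF, crF, brF, scF, addF, e0, KF,
    CF, gF, ellF, hF, mF; unfold FF, kk, rho in *; simpl;
  field_simplify_eq; [unfold FF, kk, rho in *; rewrite ?q3, ?q4, ?q5, ?q6; rewrite ?Hq; field; auto
    | unfold FF, kk, rho in *; repeat split; auto].

Definition r6 := addF (scF (f3F / FF xi c) E2f) (scF (-1) (brF c E3f E1f)).
Definition r7 := addF (scF (- (f2F / FF xi c)) E1f) (scF f5F E2f).
Definition r8 := addF r7 (scF (-1) (brF c E2f E3f)).

Lemma cr11 : CRid E1f E1f (scF (f1F / FF xi c) E3f).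
Proof. crtac. Qed.
Lemma cr12 : CRid E1f E2f (scF (f2F / FF xi c) E3f).
Proof. crtac. Qed.
Lemma cr21 : CRid E2f E1f (scF (f2F / FF xi c) E3f).
Proof. crtac. Qed.
Lemma cr22 : CRid E2f E2f (scF f4F E3f).
Proof. crtac. Qed.
Lemma cr31 : CRid E3f E1f (scF (f3F / FF xi c) E2f).
Proof. crtac. Qed.
Lemma cr13 : CRid E1f E3f r6.
Proof. unfold r6; crtac. Qed.
Lemma cr23 : CRid E2f E3f r7.
Proof. unfold r7; crtac. Qed.
Lemma cr32 : CRid E3f E2f r8.
Proof. unfold r8, r7; crtac. Qed.
Lemma cr33 : CRid E3f E3f (scF (- (f3F / 2) * X0E2) E3f).
Proof. crtac. Qed.
End Alg.

Section Main.
Variables (xi : R) (W : vec).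
Hypothesis HW : dot W W = 1.
Hypothesis HWZ : ~ (vx W = 0 /\ vy W = 0).
Hypothesis Hxi : 0 < xi < 1.
Variable nab : vec -> vec -> vec.
Hypothesis Hnab : chern_rund_eq xi W nab.
Local Notation c := (vz W).

Let og U V : oip xi W U V = gf xi W U V := oip_gf xi W U V HW.
Let cg U V T : cartan xi W U V T = Cf xi W U V T := cartan_Cf xi W U V T HW.
Let HF0 : 0 < FF xi c := FF_pos xi W HW Hxi.
Let Hr0 : 0 < rho c := rho_pos W HW HWZ.

Lemma gf_cW x : gf xi W (comb W x) W = gF xi c x e0.
Proof. pose proof (gf_comb xi W HW x e0) as H. rewrite Wc in H. exact H. Qed.
Lemma br_cW x : bracket (comb W x) W = comb W (brF c x e0).
Proof. pose proof (br_comb W HW x e0) as H. rewrite Wc in H. exact H. Qed.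
Lemma br_Wc x : bracket W (comb W x) = comb W (brF c e0 x).
Proof. pose proof (br_comb W HW e0 x) as H. rewrite Wc in H. exact H. Qed.
Lemma br_WW : bracket W W = comb W (brF c e0 e0).
Proof. pose proof (br_comb W HW e0 e0) as H. rewrite Wc in H. exact H. Qed.

Lemma NWW : nab W W = comb W (FV 0 0 (kk xi c)).
Proof.
  apply (nondeg xi W HW HWZ Hxi). intros t.
  pose proof (Hnab W W (comb W t)) as H.
  rewrite !og, !cg in H.
  rewrite (CfW2 xi W HW), (CfW3 xi W HW), (CfW2 xi W HW) in H.
  rewrite br_WW, br_Wc, br_cW, gf_comb, !gf_cW in H; auto.
  assert (E : gF xi c (brF c e0 e0) t - gF xi c (brF c e0 t) e0 + gF xi c (brF c t e0) e0
     = 2 * gF xi c (FV 0 0 (kk xi c)) t).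
  { destruct t. unfold gF, brF, e0, ellF, hF, FF, kk, rho; simpl. ring. }
  lra.
Qed.

Lemma NUW u : nab (comb W u) W = comb W (KF xi c u).
Proof.
  apply (nondeg xi W HW HWZ Hxi). intros t.
  pose proof (Hnab (comb W u) W (comb W t)) as H.
  rewrite !og, !cg in H.
  rewrite (CfW2 xi W HW), (CfW3 xi W HW), NWW in H.
  rewrite br_cW, br_Wc, br_comb, !gf_comb, !gf_cW, !Cf_comb in H; auto.
  assert (E : gF xi c (brF c u e0) t - gF xi c (brF c e0 t) u + gF xi c (brF c t u) e0
     - 2 * CF xi c (FV 0 0 (kk xi c)) t u = 2 * gF xi c (KF xi c u) t).
  { destruct t, u. pose proof (Rgt_not_eq _ _ HF0). pose proof (Rgt_not_eq _ _ Hr0).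
    clear og cg H HF0 Hr0. unfold CF, KF, gF, brF, e0, ellF, hF, mF in *. unfold FF, kk, rho in *; simpl. field; auto. }
  lra.
Qed.

Lemma nab_char u v r : CRid xi c u v r -> nab (comb W u) (comb W v) = comb W r.
Proof.
  intros Hid. apply (nondeg xi W HW HWZ Hxi). intros t.
  pose proof (Hnab (comb W u) (comb W v) (comb W t)) as H.
  rewrite !og, !cg in H. rewrite !NUW in H.
  rewrite !br_comb, !gf_comb, !Cf_comb in H; auto.
  pose proof (Hid t). lra.
Qed.


Let G := gF xi c (cvA xi c) (cvA xi c).
Lemma G_val : G = 4 * xi ^ 2 * rho c / FF xi c ^ 3.
Proof.
  unfold G. pose proof (Rgt_not_eq _ _ HF0). pose proof (Rgt_not_eq _ _ Hr0).
  clear og cg HF0 Hr0. unfold cvA, raiseF, gF, ellF, hF in *. unfold kk. simpl. field; auto.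
Qed.
Lemma G_pos : 0 < G.
Proof.
  rewrite G_val. apply Rmult_lt_0_compat.
  - apply Rmult_lt_0_compat; auto. apply Rmult_lt_0_compat; [lra|]. apply pow_lt; lra.
  - apply Rinv_0_lt_compat. apply pow_lt; auto.
Qed.

Let q := / sqrt G.
Lemma Hq : q ^ 2 = FF xi c ^ 3 / (4 * xi ^ 2 * rho c).
Proof.
  unfold q. pose proof G_pos. pose proof (sqrt_lt_R0 _ H).
  replace ((/ sqrt G) ^ 2) with (/ (sqrt G * sqrt G)) by (field; lra).
  rewrite sqrt_sqrt by lra. rewrite G_val. pose proof (Rgt_not_eq _ _ HF0). pose proof (Rgt_not_eq _ _ Hr0).
  field. repeat split; auto; lra.
Qed.

Lemma L_w : wnum xi W = FF xi c.
Proof.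
  unfold wnum. rewrite og. rewrite <- (Wc W) at 2 3. rewrite gf_comb; auto.
  replace (gF xi c e0 e0) with (FF xi c * FF xi c)
    by (unfold gF, ellF, hF, e0; simpl; ring).
  apply sqrt_square. lra.
Qed.

Lemma L_E1 : BM_E1 xi W = comb W (E1f xi c).
Proof.
  unfold BM_E1. change (sqrt (oip xi W W W)) with (wnum xi W). rewrite L_w.
  rewrite <- (Wc W) at 2. rewrite sc_comb. f_equal. apply fv_eq; unfold scF, E1f, e0; simpl; ring.
Qed.

Lemma L_E2 : BM_E2 xi W = comb W (E2f xi c q).
Proof.
  unfold BM_E2. rewrite (cv_comb xi W HW HWZ Hxi). rewrite og, gf_comb; auto.
  rewrite sc_comb. reflexivity.
Qed.

Lemma L_E3 : BM_E3 xi W = comb W (E3f xi c q).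
Proof. unfold BM_E3. rewrite L_E2, cr_comb; auto. Qed.

Lemma L_X0 : dot (X0 xi) (BM_E2 xi W) = X0E2 xi c q.
Proof. rewrite L_E2, X0_dot. reflexivity. Qed.

Lemma L_f1 : f1 xi W = f1F xi c q.
Proof. unfold f1. rewrite L_E3, L_E1, br_comb, og, gf_cW; auto. Qed.

Lemma L_f2 : f2 xi W = f2F xi c q.
Proof.
  unfold f2. rewrite L_X0, L_E3, L_E2, !br_cW, br_comb, !og, !gf_cW, gf_comb; auto.
Qed.

Lemma L_f3 : f3 xi W = f3F xi c q.
Proof.
  unfold f3. rewrite L_X0, L_E3, L_E2, !br_cW, br_comb, !og, !gf_cW, gf_comb; auto.
Qed.

Lemma L_f4 : f4 xi W = f4F xi c q.
Proof. unfold f4. rewrite L_f1, L_f2, L_w, L_X0. reflexivity. Qed.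

Lemma L_f5 : f5 xi W = f5F xi c q.
Proof. unfold f5. rewrite L_f3, L_X0, L_E3, L_E2, br_comb, og, gf_comb; auto. Qed.

Let Hn1 : FF xi c <> 0 := Rgt_not_eq _ _ HF0.
Let Hn2 : rho c <> 0 := Rgt_not_eq _ _ Hr0.
Let Hn3 : xi <> 0 := Rgt_not_eq _ _ (proj1 Hxi).

Lemma main_frame :
  let e1 := BM_E1 xi W in let e2 := BM_E2 xi W in let e3 := BM_E3 xi W in
  let w := wnum xi W in
  nab e1 e1 = vscal (f1 xi W / w) e3 /\
  nab e1 e2 = vscal (f2 xi W / w) e3 /\
  nab e2 e1 = vscal (f2 xi W / w) e3 /\
  nab e2 e2 = vscal (f4 xi W) e3 /\
  nab e3 e1 = vscal (f3 xi W / w) e2 /\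
  vadd (nab e1 e3) (bracket e3 e1) = vscal (f3 xi W / w) e2 /\
  nab e2 e3 = vadd (vscal (- (f2 xi W / w)) e1) (vscal (f5 xi W) e2) /\
  vadd (nab e3 e2) (bracket e2 e3) = vadd (vscal (- (f2 xi W / w)) e1) (vscal (f5 xi W) e2) /\
  nab e3 e3 = vscal (- (f3 xi W / 2) * dot (X0 xi) e2) e3.
Proof.
  intros e1 e2 e3 w. unfold e1, e2, e3, w.
  rewrite L_X0, L_f1, L_f2, L_f3, L_f4, L_f5, L_w, L_E1, L_E2, L_E3.
  pose proof Hq as Hq'.
  rewrite !sc_comb, !add_comb.
  rewrite !(br_comb W HW).
  rewrite (nab_char _ _ _ (cr13 xi c q Hn1 Hn2 Hn3 Hq')).
  rewrite (nab_char _ _ _ (cr32 xi c q Hn1 Hn2 Hn3 Hq')).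
  rewrite !add_comb.
  split; [apply nab_char, cr11; auto|].
  split; [apply nab_char, cr12; auto|].
  split; [apply nab_char, cr21; auto|].
  split; [apply nab_char, cr22; auto|].
  split; [apply nab_char, cr31; auto|].
  split; [f_equal; apply fv_eq; unfold r6, addF, scF; simpl; ring|].
  split; [apply nab_char, cr23; auto|].
  split; [f_equal; apply fv_eq; unfold r8, r7, addF, scF; simpl; ring|].
  apply nab_char, cr33; auto.
Qed.
End Main.

Theorem mainTheorem12 (xi : R) (Hxi : 0 < xi < 1) (W : vec)
  (HW1 : dot W W = 1) (HWZ : ~ (vx W = 0 /\ vy W = 0))
  (nab : vec -> vec -> vec) (Hbil : bilinear nab) (Hnab : chern_rund_eq xi W nab) :
  let e1 := BM_E1 xi W in let e2 := BM_E2 xi W in let e3 := BM_E3 xi W in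
  let w := wnum xi W in
  nab e1 e1 = vscal (f1 xi W / w) e3 /\
  nab e1 e2 = vscal (f2 xi W / w) e3 /\
  nab e2 e1 = vscal (f2 xi W / w) e3 /\
  nab e2 e2 = vscal (f4 xi W) e3 /\
  nab e3 e1 = vscal (f3 xi W / w) e2 /\
  vadd (nab e1 e3) (bracket e3 e1) = vscal (f3 xi W / w) e2 /\
  nab e2 e3 = vadd (vscal (- (f2 xi W / w)) e1) (vscal (f5 xi W) e2) /\
  vadd (nab e3 e2) (bracket e2 e3) = vadd (vscal (- (f2 xi W / w)) e1) (vscal (f5 xi W) e2) /\
  nab e3 e3 = vscal (- (f3 xi W / 2) * dot (X0 xi) e2) e3.
Proof.
  apply main_frame; auto.
Qed.
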